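(* Let $n\ge2$, $K\in\mathcal S_n$, let $0<R<1$ and assume $K\subseteq B(0,R)$ and $K^c\subseteq B(0,R)$. Then \[ B\Big(0,\sqrt{\tfrac54-R^2}-\tfrac12\Big)\subseteq K^c\cup(-K). \]
   Context: $B(x,r)$ is the closed Euclidean ball. For $A\subseteq\mathbb R^n$, $A^c=\bigcap_{x\in A}B(x,1)$ (with $\emptyset^c=\mathbb R^n$). $\mathcal S_n$ is the class of all sets of the form $\bigcap_{x\in A}B(x,1)$, $A\subseteq\mathbb R^n$. $-K=\{-x:x\in K\}$. *)

(* Defs.v *)
From mathcomp Require Import all_boot all_order all_algebra.
From mathcomp Require Import boolp classical_sets reals.
Set Implicit Arguments. Unset Strict Implicit. Unset Printing Implicit Defensive.
Import Order.TTheory GRing.Theory Num.Theory.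
Local Open Scope ring_scope.
Local Open Scope classical_set_scope.

Definition enorm {R : realType} {n : nat} (x : 'rV[R]_n) : R :=
  Num.sqrt (\sum_(i < n) x ord0 i ^+ 2).

Definition cball {R : realType} {n : nat} (x : 'rV[R]_n) (r : R) : set 'rV[R]_n :=
  [set y | enorm (y - x) <= r].

(* A^c = intersection over x in A of B(x,1); empty A gives the whole space *)
Definition bcomp {R : realType} {n : nat} (A : set 'rV[R]_n) : set 'rV[R]_n :=
  [set y | forall x, A x -> cball x 1 y].

Definition in_Sn {R : realType} {n : nat} (K : set 'rV[R]_n) : Prop :=
  exists A : set 'rV[R]_n, K = bcomp A.

Definition setneg {R : realType} {n : nat} (K : set 'rV[R]_n) : set 'rV[R]_n :=
  [set y | K (- y)].

(* Main.v *)
Require Import Defs.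
From mathcomp Require Import all_boot all_order all_algebra.
From mathcomp Require Import boolp classical_sets reals.
From mathcomp Require Import lra.
Import Order.TTheory GRing.Theory Num.Theory.
Local Open Scope ring_scope.
Local Open Scope classical_set_scope.

Section Aux.
Variables (R : realType) (n : nat).
Definition dt (u v : 'rV[R]_n) : R := \sum_(i < n) u ord0 i * v ord0 i.

Lemma dtC u v : dt u v = dt v u.
Proof. by apply: eq_bigr => i _; rewrite mulrC. Qed.
Lemma dtDl u v w : dt (u + v) w = dt u w + dt v w.
Proof. by rewrite /dt -big_split; apply: eq_bigr => i _; rewrite !mxE mulrDl. Qed.
Lemma dtNl u w : dt (- u) w = - dt u w.
Proof. by rewrite /dt -sumrN; apply: eq_bigr => i _; rewrite !mxE mulNr. Qed.
Lemma dtZl c u w : dt (c *: u) w = c * dt u w.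
Proof. by rewrite /dt mulr_sumr; apply: eq_bigr => i _; rewrite !mxE mulrA. Qed.
Lemma dtDr u v w : dt w (u + v) = dt w u + dt w v.
Proof. by rewrite dtC dtDl !(dtC w). Qed.
Lemma dtNr u w : dt w (- u) = - dt w u.
Proof. by rewrite dtC dtNl dtC. Qed.
Lemma dtZr c u w : dt w (c *: u) = c * dt w u.
Proof. by rewrite dtC dtZl dtC. Qed.
Lemma dt_ge0 u : 0 <= dt u u.
Proof. by apply: sumr_ge0 => i _; rewrite -expr2 sqr_ge0. Qed.
Lemma enormE u : enorm u = Num.sqrt (dt u u).
Proof. by rewrite /enorm /dt; congr Num.sqrt; apply: eq_bigr => i _; rewrite expr2. Qed.

Lemma enorm_le u c : 0 <= c -> (enorm u <= c) = (dt u u <= c ^+ 2).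
Proof.
move=> c0; rewrite enormE -(ler_psqrt (dt_ge0 u)) ?sqrtr_sqr ?ger0_norm //.
by rewrite nnegrE exprn_ge0.
Qed.
Lemma enormB (u v : 'rV[R]_n) : enorm (u - v) = enorm (v - u).
Proof. by rewrite !enormE -opprB dtNl dtNr opprK. Qed.
End Aux.

Theorem theorem3p25 (R : realType) (n : nat) (hn : (2 <= n)%N)
  (K : set 'rV[R]_n) (r : R) (hK : in_Sn K) (hr0 : 0 < r) (hr1 : r < 1)
  (hKb : K `<=` cball 0 r) (hKcb : bcomp K `<=` cball 0 r) :
  cball 0 (Num.sqrt (5 / 4 - r ^+ 2) - 1 / 2) `<=` bcomp K `|` setneg K.
Proof.
case: hK => A KA.
set s := Num.sqrt (5 / 4 - r ^+ 2).
have hs0 : 0 <= 5 / 4 - r ^+ 2 by nra.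
have hss : s ^+ 2 = 5 / 4 - r ^+ 2 by rewrite sqr_sqrtr.
have s0 : 0 <= s by rewrite sqrtr_ge0.
set p := s - 1 / 2.
have p0 : 0 < p by rewrite /p; nra.
have pe : p ^+ 2 + p + r ^+ 2 = 1 by rewrite /p; nra.
move=> x; rewrite /cball /= subr0 enorm_le; last exact: ltW. move=> hx.
have [h|h] := pselect (setneg K x); first by right.
left => y Ky; rewrite /cball /=.
case: (pselect (enorm (x - y) <= 1)) => // hxy; exfalso; apply: h.
rewrite /setneg /= KA => a Aa; rewrite /cball /= enorm_le ?ler01 // expr1n.
have aK : bcomp K a by move=> k; rewrite KA => /(_ a Aa); rewrite /cball /= enormB.
have := hKcb a aK; rewrite /cball /= subr0 enorm_le; last exact: ltW. move=> ha.
have := hKb y Ky; rewrite /cball /= subr0 enorm_le; last exact: ltW. move=> hy.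
have := Ky; rewrite KA => /(_ a Aa); rewrite /cball /= enorm_le ?ler01 // expr1n => hya.
move: hxy; rewrite enorm_le ?ler01 // expr1n => /negP; rewrite -ltNge => hxy.
have cs := @dt_ge0 R n (p *: (a - y) - x).
move: hya hxy cs.
rewrite !(dtDl, dtDr, dtNl, dtNr, dtZl, dtZr) (dtC _ _ x y) (dtC _ _ x a) (dtC _ _ a y).
move=> hya hxy cs.
have h2 : p * (@dt R n a x - @dt R n y x - p) <= 0 by nra.
have h1 : @dt R n a x - @dt R n y x <= p.
  by rewrite -subr_le0; rewrite pmulr_rle0 in h2.
nra.
Qed.
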